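(* For every prime power $q$ and every $G\in\mathfrak{g}_3(\mathbb{F}_q)$, $G$ has exactly $q+1$ nonlooped vertices, and each nonlooped vertex of $G$ is adjacent to exactly $q$ nonlooped vertices and exactly $q^2-q$ looped vertices.
   Context: For a symmetric $n\times n$ matrix $A$, the looped graph corresponding to $A$, $\Gamma(A)$, has vertex set $\{1,\dots,n\}$, an edge $ij$ ($i\neq j$) iff $a_{ij}\neq0$, and a loop at $i$ iff $a_{ii}\ne 0$. Definition of $\mathfrak{g}_k(\mathbb{F}_q)$: let $x_1,\dots,x_m$ be representatives of the classes of nonzero vectors of $\mathbb{F}_q^k$ under the relation $x\sim cx$ ($c\in\mathbb{F}_q$, $c\neq0$), and let $U=[x_1\ \cdots\ x_m]$; $\mathfrak{g}_k(\mathbb{F}_q)$ is the set of isomorphism classes of looped graphs $\Gamma(U^tBU)$ as $B$ ranges over the invertible symmetric $k\times k$ matrices over $\mathbb{F}_q$. *)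

(* Defs.v *)
From HB Require Import structures.
From mathcomp Require Import all_boot all_order all_algebra all_fingroup all_field.
Set Implicit Arguments. Unset Strict Implicit. Unset Printing Implicit Defensive.
Import GRing.Theory.
Local Open Scope ring_scope.

(* A looped graph on a finite vertex type T is a relation e : rel T;
   e x y (x <> y) means xy is an edge, e x x means a loop at x. *)

Definition Gamma (R : nzRingType) (n : nat) (A : 'M[R]_n) : rel 'I_n :=
  fun i j => A i j != 0.

(* x : 'I_m -> 'cV_k is a system of representatives of the classes of
   nonzero vectors of F^k under x ~ c x (c <> 0): every x_i is nonzero,
   distinct x_i are inequivalent, and every nonzero vector is equivalent
   to some x_i. *)
Definition proj_reps (F : fieldType) (k m : nat) (x : 'I_m -> 'cV[F]_k) : Prop :=
  [/\ forall i, x i != 0,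
      forall i j (c : F), c != 0 -> x i = c *: x j -> i = j
    & forall v : 'cV[F]_k, v != 0 -> exists i, exists2 c : F, c != 0 & v = c *: x i].

Definition repmx (F : fieldType) (k m : nat) (x : 'I_m -> 'cV[F]_k) : 'M[F]_(k, m) :=
  \matrix_(i < k, j < m) x j i 0.

Definition lgraph_iso (T1 T2 : finType) (e1 : rel T1) (e2 : rel T2) : Prop :=
  exists f : T1 -> T2, bijective f /\ forall a b, e1 a b = e2 (f a) (f b).

Definition in_gk (F : fieldType) (k : nat) (T : finType) (G : rel T) : Prop :=
  exists m (x : 'I_m -> 'cV[F]_k) (B : 'M[F]_k),
    [/\ proj_reps x, B^T = B, B \in unitmx &
        lgraph_iso G (Gamma ((repmx x)^T *m B *m repmx x))].

(* Main.v *)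
Require Import Defs.
From HB Require Import structures.
From Stdlib Require Import Lia.
From mathcomp Require Import all_boot all_order all_algebra all_fingroup all_field.
Set Implicit Arguments. Unset Strict Implicit. Unset Printing Implicit Defensive.
Import GRing.Theory.
Local Open Scope ring_scope.

Lemma card_prod_bij (S T U : finType) (A : {set S}) (Bs : {set T}) (C : {set U})
  (f : S * T -> U) (g : U -> S * T) :
  (forall a b, a \in A -> b \in Bs -> f (a, b) \in C /\ g (f (a, b)) = (a, b)) ->
  (forall u, u \in C -> [/\ (g u).1 \in A, (g u).2 \in Bs & f (g u) = u]) ->
  #|C| = (#|A| * #|Bs|)%N.
Proof.
move=> h1 h2; rewrite -cardsX.
have -> : C = f @: setX A Bs.
  apply/setP => u; apply/idP/imsetP.
    move=> uC; have [g1 g2 fg] := h2 u uC; exists (g u) => //.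
    by rewrite inE g1 g2.
  by case=> [[a b]]; rewrite inE /= => /andP [aA bB] ->; case: (h1 a b aA bB).
apply: card_in_imset => [[a b] [a' b']]; rewrite !inE /= => /andP [aA bB] /andP [aA' bB'] e.
by have [_ <-] := h1 a b aA bB; have [_ <-] := h1 a' b' aA' bB'; rewrite e.
Qed.

Lemma card_split (T : finType) (P R : pred T) :
  #|[set j | P j]| = (#|[set j | P j && R j]| + #|[set j | P j && ~~ R j]|)%N.
Proof.
rewrite -(cardsID [set j | R j] [set j | P j]); congr (_ + _); apply: eq_card => j;
by rewrite !inE // andbC.
Qed.

Lemma card_bij_pred (T1 T2 : finType) (f : T1 -> T2) (P : pred T2) :
  bijective f -> #|[set a | P (f a)]| = #|[set i | P i]|.
Proof.
move=> fb; have [g fg gf] := fb.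
rewrite -(card_imset _ (bij_inj fb)); apply: eq_card => i.
apply/imsetP/idP => [[a]|]; rewrite inE => Pa.
  by move=> ->; rewrite inE.
by exists (g i); rewrite ?inE gf.
Qed.


Section Form.
Variable F : finFieldType.
Variable B : 'M[F]_3.
Hypothesis Bsym : B^T = B.
Hypothesis Bu : B \in unitmx.

Definition bf (x y : 'cV[F]_3) : F := (x^T *m B *m y) 0 0.
Local Notation Q x := (bf x x).

Lemma bfC x y : bf x y = bf y x.
Proof.
have tr11 (M : 'M[F]_1) : M 0 0 = M^T 0 0 by rewrite mxE.
by rewrite /bf [RHS]tr11 !trmx_mul trmxK Bsym mulmxA.
Qed.

Lemma bfDr x y z : bf x (y + z) = bf x y + bf x z.
Proof. by rewrite /bf mulmxDr mxE. Qed.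
Lemma bfZr x c y : bf x (c *: y) = c * bf x y.
Proof. by rewrite /bf -scalemxAr mxE. Qed.
Lemma bfNr x y : bf x (- y) = - bf x y.
Proof. by rewrite /bf mulmxN mxE. Qed.
Lemma bf0r x : bf x 0 = 0.
Proof. by rewrite /bf mulmx0 mxE. Qed.
Lemma bfDl x y z : bf (y + z) x = bf y x + bf z x.
Proof. by rewrite !(bfC _ x) bfDr. Qed.
Lemma bfZl x c y : bf (c *: y) x = c * bf y x.
Proof. by rewrite !(bfC _ x) bfZr. Qed.
Lemma bfNl x y : bf (- y) x = - bf y x.
Proof. by rewrite !(bfC _ x) bfNr. Qed.
Lemma bf0l x : bf 0 x = 0.
Proof. by rewrite bfC bf0r. Qed.

Lemma QD x y : Q (x + y) = Q x + Q y + 2%:R * bf x y.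
Proof.
rewrite bfDl !bfDr (bfC y x) mulr2n mulrDl mul1r.
set a := bf x x; set b := bf y y; set c := bf x y.
by rewrite -!addrA; congr (_ + _); rewrite [c + b]addrC addrCA.
Qed.
Lemma QZ c x : Q (c *: x) = c ^+ 2 * Q x.
Proof. by rewrite bfZl bfZr mulrA expr2. Qed.


Lemma bf11 x y : x^T *m B *m y = (bf x y)%:M.
Proof. exact: mx11_scalar. Qed.

Lemma iso_perp v y : v != 0 -> Q v = 0 -> bf v y = 0 -> Q y = 0 ->
  exists s, y = s *: v.
Proof.
move=> v0 Qv bvy Qy.
case: (boolP (y^T <= v^T)%MS) => [/sub_rVP [a ha] | nsub].
  by exists a; apply: trmx_inj; rewrite ha linearZ.
have y0 : y^T != 0.
  by apply: contra nsub => /eqP ->; rewrite sub0mx.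
have v0' : v^T != 0 by apply: contra v0 => /eqP h; rewrite -(trmxK v) h linear0.
set P := col_mx v^T y^T.
have rP : \rank P = 2.
  rewrite -addsmxE.
  have := mxrank_sum_cap v^T y^T; rewrite !rank_rV v0' y0 /=.
  have -> : \rank (v^T :&: y^T)%MS = 0.
    apply/eqP; rewrite -leqn0; apply: contraR nsub; rewrite -ltnNge => h.
    have h1 : (\rank (v^T :&: y^T)%MS <= \rank y^T)%N by apply: mxrankS; apply: capmxSr.
    have: (y^T <= v^T :&: y^T)%MS.
      have := mxrank_leqif_sup (capmxSr v^T y^T).
      move=> [_ <-]; rewrite eqn_leq h1 /= rank_rV y0; done.
    by move=> /submx_trans; apply; apply: capmxSl.
  by rewrite addn0 => ->.
have PBP : P *m B *m P^T = 0.
  rewrite /P tr_col_mx !trmxK mul_col_mx mul_mx_row !mul_col_mx !bf11.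
  by rewrite bvy (bfC y v) bvy Qv Qy raddf0 col_mx0 row_mx0.
have : (P *m B <= kermx P^T)%MS by apply/sub_kermxP.
move/mxrankS; rewrite mxrank_ker mxrank_tr rP mxrankMfree ?row_free_unit //.
by rewrite rP.
Qed.


Lemma exists_w v : v != 0 -> exists w, bf v w = 1.
Proof.
move=> v0.
have nz : v^T *m B != 0.
  rewrite mulmx_free_eq0 ?row_free_unit //.
  by apply: contra v0 => /eqP h; rewrite -(trmxK v) h linear0.
have [k hk] : exists k, (v^T *m B) 0 k != 0.
  apply/existsP; apply: contraR nz; rewrite negb_exists => /forallP h.
  apply/eqP/matrixP => i j; rewrite ord1 [RHS]mxE; by apply/eqP; move: (h j); rewrite negbK.
exists (((v^T *m B) 0 k)^-1 *: delta_mx k 0).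
by rewrite bfZr /bf -colE [col _ _ _ _]mxE mulVf.
Qed.

Lemma cardH v c : v != 0 -> #|[set x | bf v x == c]| = (#|F| ^ 2)%N.
Proof.
move=> v0; have [w bw] := exists_w v0.
have := @card_prod_bij _ _ _ [set: F] [set x | bf v x == c] [set: 'cV[F]_3]
  (fun p => p.2 + p.1 *: w) (fun y => (bf v y - c, y - (bf v y - c) *: w)).
rewrite cardsT card_mx cardsT => h.
have : (#|F| * #|F| ^ 2 = #|F| * #|[set x | bf v x == c]|)%N.
  rewrite -h //=.
  - move=> a b _; rewrite inE => /eqP bc; split; first by rewrite in_setT.
    have e : bf v (b + a *: w) - c = a by rewrite bfDr bfZr bw mulr1 bc addrAC subrr add0r.
    by rewrite e addrK.
  - move=> u _; split => /=; rewrite ?in_setT ?subrK //.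
    by rewrite inE bfDr bfNr bfZr bw mulr1 opprB addrC subrK.
have q0 : (0 < #|F|)%N by apply/card_gt0P; exists 0.
by move/eqP; rewrite eqn_pmul2l // => /eqP.
Qed.

Lemma QN x : Q (- x) = Q x.
Proof. by rewrite bfNl bfNr opprK. Qed.

Lemma scalev_inj (v : 'cV[F]_3) s s' : v != 0 -> s *: v = s' *: v -> s = s'.
Proof.
move=> v0 /eqP; rewrite -subr_eq0 -scalerBl scaler_eq0 (negbTE v0) orbF subr_eq0.
by move/eqP.
Qed.

Lemma q1 : (1 < #|F|)%N.
Proof.
have := subset_leq_card (subsetT [set (0 : F); 1]).
by rewrite cards2 eq_sym oner_neq0 cardsT.
Qed.

Lemma cardZH1 v : v != 0 -> Q v = 0 ->
  #|[set x | (bf v x == 1) && (Q x == 0)]| = #|F|.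
Proof.
move=> v0 Qv.
have q0 : (0 < #|F|)%N by apply/card_gt0P; exists 0.
case: (boolP ((2%:R : F) == 0)) => [/eqP two0 | two0].
-
  have [u uH Qu] : exists2 u, bf v u = 0 & Q u != 0.
    have : (#|[set s *: v | s in [set: F]]| < #|[set x | bf v x == 0%R]|)%N.
      rewrite cardH //; apply: (leq_ltn_trans (leq_imset_card _ _)).
      by rewrite cardsT expnS -{1}(muln1 #|F|) ltn_pmul2l // q1.
    move=> hlt; have : ~~ ([set x | bf v x == 0%R] \subset [set s *: v | s in [set: F]]).
      by apply: contraL hlt => /subset_leq_card; rewrite leqNgt.
    case/subsetPn => u; rewrite inE => /eqP bu nu; exists u => //.
    apply: contra nu => /eqP Qu; have [s ->] := iso_perp v0 Qv bu Qu.
    by apply: imset_f; rewrite in_setT.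
  have [w bw] := exists_w v0.
  have sqinj : injective (fun x : F => x ^+ 2).
    move=> x y /= e; apply/eqP; rewrite -subr_eq0.
    suff: (x - y) ^+ 2 == 0 by rewrite expf_eq0.
    rewrite sqrrB e.
    rewrite -mulr_natr two0 mulr0 subr0 -mulr2n -mulr_natr two0 mulr0 //.
  have [t ht] : exists t, t ^+ 2 = Q w / Q u.
    by have [g c1 c2] := injF_bij sqinj; exists (g (Q w / Q u)); rewrite c2.
  set z0 := w + t *: u.
  have bz0 : bf v z0 = 1 by rewrite bfDr bfZr uH mulr0 addr0.
  have Qz0 : Q z0 = 0.
    by rewrite QD QZ ht divfK // two0 mul0r addr0 -mulr2n -mulr_natr two0 mulr0.
  have -> : [set x | (bf v x == 1) && (Q x == 0)] = [set z0 + s *: v | s in [set: F]].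
    apply/setP => x; rewrite inE; apply/andP/imsetP.
    - case=> /eqP bx /eqP Qx.
      have bd : bf v (x - z0) = 0 by rewrite bfDr bfNr bx bz0 subrr.
      have Qd : Q (x - z0) = 0 by rewrite QD QN Qx Qz0 two0 mul0r !addr0.
      have [s hs] := iso_perp v0 Qv bd Qd.
      by exists s; rewrite ?in_setT // -hs addrC subrK.
    - case=> s _ ->; split; apply/eqP.
        by rewrite bfDr bfZr Qv mulr0 addr0 bz0.
      by rewrite QD QZ Qv Qz0 two0 mulr0 mul0r !addr0.
  rewrite card_in_imset ?cardsT // => s s' _ _ /= /addrI.
  exact: scalev_inj v0.
-
  have := @card_prod_bij _ _ _ [set: F] [set x | (bf v x == 1) && (Q x == 0)]
    [set x | bf v x == 1]
    (fun p => p.2 + p.1 *: v) (fun x => (Q x / 2%:R, x - (Q x / 2%:R) *: v)).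
  rewrite cardsT cardH //.
  have e1 : forall z s, bf v z = 1 -> Q z = 0 -> Q (z + s *: v) = s * 2%:R.
    move=> z s bz Qz; rewrite QD QZ Qv Qz bfZr (bfC z v) bz.
    by rewrite mulr0 !add0r mulr1 mulrC.
  have e2 : forall x t, bf v x = 1 -> Q (x - t *: v) = Q x - t * 2%:R.
    move=> x t bx; rewrite QD QN QZ Qv bfNr bfZr (bfC x v) bx.
    by rewrite mulr0 addr0 mulr1 mulrN mulrC.
  move=> h; apply/eqP; rewrite -(eqn_pmul2l q0) mulnn h //=.
  + move=> a z _; rewrite inE => /andP [/eqP bz /eqP Qz]; split.
      by rewrite inE bfDr bfZr Qv mulr0 addr0 bz.
    by rewrite (e1 z a bz Qz) mulfK // addrK.
  + move=> x; rewrite inE => /eqP bx; split; rewrite ?in_setT ?subrK //.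
    rewrite inE bfDr bfNr bfZr Qv mulr0 subr0 bx eqxx /=.
    by rewrite e2 // divfK // subrr.
Qed.

Lemma squares_card : (#|F| < 2 * #|[set x ^+ 2 | x in [set: F]]|)%N.
Proof.
set S := [set x ^+ 2 | x in [set: F]].
pose r (s : F) := odflt 0 [pick x | x ^+ 2 == s].
have rP x : r (x ^+ 2) = x \/ r (x ^+ 2) = - x.
  rewrite /r; case: pickP => [y /eqP hy | /(_ x)]; last by rewrite eqxx.
  have : (y - x) * (y + x) == 0 by rewrite -subr_sqr hy subrr.
  rewrite mulf_eq0 subr_eq0 addr_eq0 => /orP [/eqP -> | /eqP ->]; by [left | right].
have r0 : r 0 = 0.
  by case: (rP 0); rewrite expr2 mul0r ?oppr0.
set A1 := [set r s | s in S]; set A2 := [set - r s | s in S].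
have sub : [set: F] \subset A1 :|: A2.
  apply/subsetP => x _; rewrite inE.
  have xS : x ^+ 2 \in S by apply: imset_f; rewrite in_setT.
  case: (rP x) => h; apply/orP; [left | right]; apply/imsetP; exists (x ^+ 2) => //.
  by rewrite h opprK.
have h : (#|F| <= #|A1| + #|A2| - #|A1 :&: A2|)%N.
  by rewrite -cardsU -cardsT; apply: subset_leq_card.
have c1 : (#|A1| <= #|S|)%N := leq_imset_card _ _.
have c2 : (#|A2| <= #|S|)%N := leq_imset_card _ _.
have c3 : (0 < #|A1 :&: A2|)%N.
  have S0 : 0 \in S by apply/imsetP; exists 0; rewrite ?in_setT // expr2 mul0r.
  apply/card_gt0P; exists 0; rewrite inE; apply/andP; split; apply/imsetP;
    exists 0 => //; by rewrite r0 ?oppr0.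
have c4 : (#|A1 :&: A2| <= #|A1|)%N by apply/subset_leq_card/subsetIl.
move: h c1 c2 c3 c4; generalize #|A1 :&: A2| #|A1| #|A2| #|S| #|F| => a b c d e.
move=> /leP h /leP c1 /leP c2 /leP c3 /leP c4; apply/leP; move: h.
rewrite ?subnE ?mulnE ?addnE; lia.
Qed.

Lemma pigeon (a b c : F) : a != 0 -> b != 0 ->
  exists x y, a * x ^+ 2 + b * y ^+ 2 + c = 0.
Proof.
move=> a0 b0.
set S := [set x ^+ 2 | x in [set: F]].
set A := [set a * s | s in S]; set C := [set - c - b * s | s in S].
have cA : #|A| = #|S| by apply: card_in_imset => s t _ _; apply: mulfI.
have cC : #|C| = #|S|.
  by apply: card_in_imset => s t _ _ /= /addrI /oppr_inj; apply: mulfI.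
have : ~~ [disjoint A & C].
  apply/negP => dis; have := subset_leq_card (subsetT (A :|: C)).
  rewrite cardsU cardsT (disjoint_setI0 dis) cards0 subn0 cA cC addnn -mul2n.
  by rewrite leqNgt squares_card.
case/pred0Pn => z /andP [/imsetP [s1 /imsetP [x _ ->] ->] /imsetP [s2 /imsetP [y _ ->]]].
move=> e; exists x, y; rewrite e. by rewrite subrK addrC subrr.
Qed.

Lemma ker_vec n (A : 'M[F]_(3, n)) : (n < 3)%N ->
  exists y : 'cV[F]_3, y != 0 /\ y^T *m A = 0.
Proof.
move=> n3; set K := kermx A.
have K0 : K != 0.
  rewrite kermx_eq0 /row_free; apply/eqP => h.
  by move: (rank_leq_col A); rewrite h leqNgt n3.
exists (nz_row K)^T; split.
  apply: contra K0 => /eqP h.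
  by rewrite -nz_row_eq0 -(trmxK (nz_row K)) h linear0.
by rewrite trmxK; apply/sub_kermxP; apply: nz_row_sub.
Qed.

Lemma scal11 (a : F) : (a%:M : 'M[F]_1) = 0 -> a = 0.
Proof. by move/matrixP/(_ 0 0); rewrite !mxE eqxx mulr1n. Qed.

Lemma exists_iso : exists v : 'cV[F]_3, v != 0 /\ Q v = 0.
Proof.
have bfk (y e : 'cV[F]_3) : y^T *m (B *m e) = (bf y e)%:M by rewrite mulmxA bf11.
set e1 : 'cV[F]_3 := delta_mx 0 0.
have e10 : e1 != 0.
  apply/eqP => /matrixP /(_ 0 0); rewrite !mxE !eqxx /= => /eqP.
  by rewrite oner_eq0.
case: (eqVneq (Q e1) 0) => [Q1 | Q1]; first by exists e1.
have [e2 [e20 h2]] := ker_vec (B *m e1) isT.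
move: h2; rewrite bfk => /scal11 h2.
case: (eqVneq (Q e2) 0) => [Q2 | Q2]; first by exists e2.
have [e3 [e30 h3]] := ker_vec (row_mx (B *m e1) (B *m e2)) isT.
move: h3; rewrite mul_mx_row !bfk -row_mx0 => /eq_row_mx [/scal11 h31 /scal11 h32].
case: (eqVneq (Q e3) 0) => [Q3 | Q3]; first by exists e3.
have [x [y hxy]] := pigeon (Q e3) Q1 Q2.
have b13 : bf e1 e3 = 0 by rewrite bfC.
have b23 : bf e2 e3 = 0 by rewrite bfC.
have b12 : bf e1 e2 = 0 by rewrite bfC.
exists (x *: e1 + y *: e2 + e3); split.
  apply/eqP => v0.
  have : bf e1 (x *: e1 + y *: e2 + e3) = x * Q e1.
    by rewrite !bfDr !bfZr b12 b13 mulr0 !addr0.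
  rewrite v0 bf0r => /esym /eqP; rewrite mulf_eq0 (negbTE Q1) orbF => /eqP x0.
  have : bf e2 (x *: e1 + y *: e2 + e3) = y * Q e2.
    by rewrite !bfDr !bfZr h2 b23 mulr0 !addr0 add0r.
  rewrite v0 bf0r => /esym /eqP; rewrite mulf_eq0 (negbTE Q2) orbF => /eqP y0.
  by move: v0; rewrite x0 y0 !scale0r !add0r => /eqP; rewrite (negbTE e30).
rewrite QD QD !QZ bfDl !bfZl !bfZr b12 b13 b23 !mulr0 !addr0.
by rewrite mulr0 addr0 (mulrC (x ^+ 2)) (mulrC (y ^+ 2)) hxy.
Qed.

Variable m : nat.
Variable x : 'I_m -> 'cV[F]_3.
Hypothesis reps : proj_reps x.

Lemma entryE i j : ((repmx x)^T *m B *m repmx x) i j = bf (x i) (x j).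
Proof.
rewrite /bf !mxE; apply: eq_bigr => k _; rewrite !mxE; congr (_ * _).
by apply: eq_bigr => l _; rewrite !mxE.
Qed.

Lemma proj_count v (P : 'cV[F]_3 -> bool) :
  (forall c y, c != 0 -> P (c *: y) = P y) ->
  #|[set j | (bf v (x j) != 0) && P (x j)]| = #|[set y | (bf v y == 1) && P y]|.
Proof.
case: reps => xnz xinj xsurj Pinv.
pose g j := (bf v (x j))^-1 *: x j.
rewrite -(@card_in_imset _ _ g).
  apply: eq_card => y; apply/imsetP/idP.
    case=> j; rewrite inE => /andP [bj Pj] ->; rewrite inE /g bfZr mulVf // eqxx /=.
    by rewrite Pinv // invr_eq0.
  rewrite inE => /andP [/eqP by1 Py].
  have y0 : y != 0.
    by apply/eqP => y0; move: by1; rewrite y0 bf0r => /eqP; rewrite eq_sym oner_eq0.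
  have [i [c c0 yc]] := xsurj y y0.
  have bi : c * bf v (x i) = 1 by rewrite -bfZr -yc.
  have bi0 : bf v (x i) != 0.
    by apply/eqP => b0; move: bi; rewrite b0 mulr0 => /eqP; rewrite eq_sym oner_eq0.
  exists i; first by rewrite inE bi0 /= -(Pinv c) // -yc.
  rewrite /g yc; congr (_ *: _).
  by apply: (mulfI bi0); rewrite mulfV // mulrC bi.
move=> i j; rewrite !inE => /andP [bi _] /andP [bj _] /= e.
apply: (xinj i j ((bf v (x i)) * (bf v (x j))^-1)).
  by rewrite mulf_neq0 ?invr_eq0.
by rewrite -scalerA; rewrite /g in e; rewrite -e scalerA mulfV // scale1r.
Qed.

Lemma Q0inv c y : c != 0 -> (Q (c *: y) == 0) = (Q y == 0).
Proof. by move=> c0; rewrite QZ mulf_eq0 expf_eq0 /= (negbTE c0). Qed.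

Lemma count_adj_nl i : Q (x i) = 0 ->
  #|[set j | [&& j != i, bf (x i) (x j) != 0 & Q (x j) == 0]]| = #|F|.
Proof.
move=> Qi; have xi0 : x i != 0 by case: reps.
rewrite -(cardZH1 xi0 Qi) -(@proj_count (x i) (fun y => Q y == 0)); last exact: Q0inv.
apply: eq_card => j; rewrite !inE; case: eqP => //= ->.
by rewrite Qi eqxx.
Qed.

Lemma count_adj_l i : Q (x i) = 0 ->
  #|[set j | [&& j != i, bf (x i) (x j) != 0 & Q (x j) != 0]]| = (#|F| ^ 2 - #|F|)%N.
Proof.
move=> Qi; have xi0 : x i != 0 by case: reps.
have := card_split (fun y => bf (x i) y == 1) (fun y => Q y == 0).
rewrite cardH // cardZH1 // => ->; rewrite addKn.
rewrite -(@proj_count (x i) (fun y => Q y != 0)); last by move=> c y c0; rewrite Q0inv.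
apply: eq_card => j; rewrite !inE; case: eqP => //= ->.
by rewrite Qi eqxx andbF.
Qed.

Lemma count_nl i : Q (x i) = 0 ->
  #|[set j | Q (x j) == 0]| = (#|F| + 1)%N.
Proof.
move=> Qi; have xi0 : x i != 0 by case: reps.
rewrite (card_split _ (fun j => bf (x i) (x j) == 0)) addnC; congr (_ + _)%N.
  rewrite -(count_adj_nl Qi); apply: eq_card => j; rewrite !inE andbC.
  case: (eqVneq j i) => [-> | _] /=; first by rewrite Qi eqxx.
  by [].
have -> : [set j | (Q (x j) == 0) && (bf (x i) (x j) == 0)] = [set i].
  apply/setP => j; rewrite !inE; apply/andP/eqP => [[/eqP Qj /eqP bj] | ->].
    have [s hs] := iso_perp xi0 Qi bj Qj.
    case: reps => xnz xinj _; apply: (xinj j i s) => //.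
    by apply: contra (xnz j) => /eqP s0; rewrite hs s0 scale0r.
  by rewrite Qi eqxx.
by rewrite cards1.
Qed.

End Form.


Theorem mainTheorem17 (F : finFieldType) (T : finType) (G : rel T) :
  in_gk F 3 G ->
  #|[set v : T | ~~ G v v]| = (#|F| + 1)%N /\
  (forall v : T, ~~ G v v ->
     #|[set w : T | [&& w != v, G v w & ~~ G w w]]| = #|F| /\
     #|[set w : T | [&& w != v, G v w & G w w]]| = (#|F| ^ 2 - #|F|)%N).
Proof.
move=> [m [x [B [reps Bsym Bu [f [fb fG]]]]]].
have Gx a b : G a b = (bf B (x (f a)) (x (f b)) != 0).
  by rewrite fG /Gamma entryE.
case: (reps) => _ _ xs.
have [v [v0 Qv]] := exists_iso Bsym.
have [i0 [c c0 hv]] := xs v v0.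
have Qi0 : bf B (x i0) (x i0) = 0.
  apply/eqP; move: Qv; rewrite hv (QZ Bsym) => /eqP.
  by rewrite mulf_eq0 expf_eq0 /= (negbTE c0).
split.
  rewrite -(count_nl Bsym Bu reps Qi0).
  rewrite -(card_bij_pred (fun j => bf B (x j) (x j) == 0) fb).
  by apply: eq_card => a; rewrite !inE Gx negbK.
move=> a Ga.
have Qa : bf B (x (f a)) (x (f a)) = 0 by move: Ga; rewrite Gx negbK => /eqP.
split.
  rewrite -(count_adj_nl Bsym Bu reps Qa).
  rewrite -(card_bij_pred (fun j => [&& j != f a, bf B (x (f a)) (x j) != 0
                                       & bf B (x j) (x j) == 0]) fb).
  by apply: eq_card => w; rewrite !inE !Gx negbK (bij_eq fb).
rewrite -(count_adj_l Bsym Bu reps Qa).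
rewrite -(card_bij_pred (fun j => [&& j != f a, bf B (x (f a)) (x j) != 0
                                     & bf B (x j) (x j) != 0]) fb).
by apply: eq_card => w; rewrite !inE !Gx (bij_eq fb).
Qed.
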